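(* Fix an integer $k\ge 3$. There exist a constant $c>0$ and $n_0$ (depending only on $k$) such that for every even $n\ge n_0$ and all $\mathbf{x},\mathbf{x}'\in\{0,1\}^{n/2}$ with $D:=|\mathbf{x}|-|\mathbf{x}'|\ge 0$, $$C_k(G^{\mathbf{x}})-C_k(G^{\mathbf{x}'})\ \ge\ c\,n^{k-2}D,$$ i.e. $C_k(G^{\mathbf{x}})-C_k(G^{\mathbf{x}'})=\Omega(n^{k-2}\cdot D)$.
   Context: For even $n$ and $\mathbf{x}=(x_1,\dots,x_{n/2})\in\{0,1\}^{n/2}$, the graph $G^{\mathbf{x}}=(V,E^{\mathbf{x}})$ has $V=\{v_1,\dots,v_n\}$; every pair $\{u,v\}$ of distinct nodes that is not of the form $\{v_{2i-1},v_{2i}\}$ is an edge, and for $1\le i\le n/2$ the pair $\{v_{2i-1},v_{2i}\}$ is an edge iff $x_i=1$. $|\mathbf{x}|$ denotes the number of ones in $\mathbf{x}$. $C_k(G)$ is the number of subgraphs of $G$ isomorphic to the cycle on $k$ vertices. *)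

(* Defs.v *)
From HB Require Import structures.
From mathcomp Require Import all_boot all_order all_algebra.
From mathcomp Require Import reals.
Set Implicit Arguments. Unset Strict Implicit. Unset Printing Implicit Defensive.
Import Order.TTheory GRing.Theory Num.Theory.

(* Vertices v_1..v_n are represented by 'I_n (v_{j+1} <-> j).  The pair
   {v_{2i-1}, v_{2i}} (1 <= i <= n/2) becomes {2(i-1), 2(i-1)+1}, i.e. the
   pairs {u,v} with u./2 = v./2; its indicator is x (u./2).
   x : {ffun 'I_(n./2) -> bool}, coordinate x_i <-> x (i-1). *)

Definition Gx_adj (n : nat) (x : {ffun 'I_(n./2) -> bool}) (u v : 'I_n) : bool :=
  (u != v) &&
  (if (u : nat)./2 == (v : nat)./2 then
     (if insub ((u : nat)./2) is Some i then x i else false)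
   else true).

Definition weight m (x : {ffun 'I_m -> bool}) : nat := #|[set i | x i]|.

Definition cyc_adj k (i j : 'I_k) : bool :=
  ((j : nat) == (i.+1 %% k)) || ((i : nat) == (j.+1 %% k)).

Definition is_subgraph n (e : rel 'I_n) (S : {set 'I_n}) (F : {set {set 'I_n}}) :=
  [forall E in F, exists u, exists v,
     [&& E == [set u; v], u != v, e u v, u \in S & v \in S]].

Definition iso_cycle n k (S : {set 'I_n}) (F : {set {set 'I_n}}) :=
  [exists f : {ffun 'I_k -> 'I_n},
     [&& injectiveb f, [set f i | i in 'I_k] == S &
         [forall i, forall j, ([set f i; f j] \in F) == cyc_adj i j]]].

Definition Ck n k (e : rel 'I_n) : nat :=
  #|[set p : {set 'I_n} * {set {set 'I_n}} |
      is_subgraph e p.1 p.2 && iso_cycle k p.1 p.2]|.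

(* Main.v *)
Require Import Defs.
From HB Require Import structures.
From mathcomp Require Import all_boot all_order all_algebra.
From mathcomp Require Import reals.
From mathcomp Require Import all_fingroup zify ring lra.
Import Order.TTheory GRing.Theory Num.Theory.
Set Implicit Arguments. Unset Strict Implicit. Unset Printing Implicit Defensive.

Lemma set2_eq (T : finType) (a b c d : T) :
  [set a; b] = [set c; d] -> (a = c /\ b = d) \/ (a = d /\ b = c).
Proof.
move/setP => H.
have Ha := H a; have Hb := H b; have Hc := H c; have Hd := H d.
rewrite !inE !eqxx ?orbT /= in Ha Hb Hc Hd.
have {}Ha : (a==c)||(a==d) by rewrite -Ha.
have {}Hb : (b==c)||(b==d) by rewrite -Hb.
case/orP: Ha => /eqP ac; case/orP: Hb => /eqP bd; subst; auto.
- by left; split=> //; case/orP: Hd => [] /eqP.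
- by left; split=> //; case/orP: Hc => [] /eqP.
Qed.

Definition CS n k (e : rel 'I_n) :=
  [set p : {set 'I_n} * {set {set 'I_n}} | is_subgraph e p.1 p.2 && iso_cycle k p.1 p.2].

Lemma CkE n k e : Ck k e = #|@CS n k e|.
Proof. by []. Qed.

Lemma CS_mono n k (e e' : rel 'I_n) : (forall u v, e u v -> e' u v) ->
  CS k e \subset CS k e'.
Proof.
move=> ee'; apply/subsetP => -[S F]; rewrite !inE /= => /andP [hs ->].
rewrite andbT; apply/forallP => E; apply/implyP => EF.
have /existsP [u /existsP [v /and5P [a b c d f]]] := implyP (forallP hs E) EF.
by apply/existsP; exists u; apply/existsP; exists v; rewrite a b ee' ?d ?f.
Qed.

Lemma Ck_inj n k (e e' : rel 'I_n) (s : 'I_n -> 'I_n) : injective s ->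
  (forall u v, e' (s u) (s v) = e u v) -> (Ck k e <= Ck k e')%N.
Proof.
move=> si hs; rewrite !CkE.
pose g := fun p : {set 'I_n} * {set {set 'I_n}} => (s @: p.1, [set s @: E | E : {set _} in p.2]).
have gi : injective g.
  move=> [S1 F1] [S2 F2] [h1 h2]; congr pair; first exact: (imset_inj si).
  exact: (imset_inj (imset_inj si)) h2.
rewrite -(card_imset _ gi); apply: subset_leq_card.
apply/subsetP => _ /imsetP [[S F] HSF ->]; rewrite inE in HSF.
case/andP: HSF => /= hsub hiso; rewrite inE /=; apply/andP; split.
  apply/forallP => E'; apply/implyP => /imsetP [E HE ->].
  have /existsP [u /existsP [v /and5P [/eqP -> uv euv uS vS]]] := implyP (forallP hsub E) HE.
  apply/existsP; exists (s u); apply/existsP; exists (s v).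
  by rewrite imsetU1 imset_set1 eqxx (inj_eq si) uv hs euv !imset_f.
case/existsP: hiso => f /and3P [fi /eqP fS /forallP fE].
apply/existsP; exists [ffun i => s (f i)]; apply/and3P; split.
- apply/injectiveP => i j; rewrite !ffunE => /si; exact: (injectiveP _ fi).
- apply/eqP; rewrite -fS -imset_comp; apply: eq_imset => i; by rewrite ffunE.
- apply/forallP=> i; apply/forallP=> j; rewrite !ffunE.
  have := forallP (fE i) j.
  have -> : [set s (f i); s (f j)] = s @: [set f i; f j] by rewrite imsetU1 imset_set1.
  by rewrite (mem_imset _ _ (imset_inj si)).
Qed.


Lemma cyc_adj_neq k (i j : 'I_k) : (2 <= k)%N -> cyc_adj i j -> i != j.
Proof.
move=> k2; rewrite /cyc_adj; apply: contraTN => /eqP ->; rewrite orbb.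
have := ltn_ord j; case: (ltngtP j.+1 k) => [lt _|//|eq _].
  by rewrite modn_small // eqn_leq ltnn andbF.
by rewrite eq modnn; apply/negP => /eqP j0; move: eq; rewrite j0 => k1; rewrite -k1 in k2.
Qed.

Lemma cyc_adj_sym k (i j : 'I_k) : cyc_adj i j = cyc_adj j i.
Proof. by rewrite /cyc_adj orbC. Qed.

Definition cycF n k (f : {ffun 'I_k -> 'I_n}) : {set {set 'I_n}} :=
  [set E : {set 'I_n} | [exists i, exists j, cyc_adj i j && (E == [set f i; f j])]].

Lemma cyc_in n k (e : rel 'I_n) (f : {ffun 'I_k -> 'I_n}) : (2 <= k)%N -> injective f ->
  (forall i j, i != j -> e (f i) (f j)) ->
  ([set f i | i in 'I_k], cycF f) \in CS k e.
Proof.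
move=> k2 fi fe; rewrite inE /=; apply/andP; split.
  apply/forallP => E; apply/implyP; rewrite inE => /existsP [i /existsP [j /andP [ij /eqP ->]]].
  apply/existsP; exists (f i); apply/existsP; exists (f j).
  have nij := cyc_adj_neq k2 ij.
  by rewrite eqxx (inj_eq fi) nij fe // !imset_f.
apply/existsP; exists f; apply/and3P; split => //; first exact/injectiveP.
apply/forallP => i; apply/forallP => j; rewrite inE.
apply/eqP; apply/idP/idP; last first.
  by move=> ij; apply/existsP; exists i; apply/existsP; exists j; rewrite ij eqxx.
case/existsP => i' /existsP [j' /andP [ij /eqP /set2_eq]].
by case=> [[/fi -> /fi ->]|[/fi -> /fi ->]]; rewrite // cyc_adj_sym.
Qed.


Lemma mk_proof n (j : 'I_(n./2)) (b : bool) : (j.*2 + b < n)%N.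
Proof. have := ltn_ord j; case: b => /=; lia. Qed.

Definition mk n (j : 'I_(n./2)) (b : bool) : 'I_n := Ordinal (mk_proof j b).

Lemma mk_half n j b : ((@mk n j b : nat)./2) = j.
Proof. rewrite /= ; case: b; lia. Qed.

Lemma mk_odd n j b : odd (@mk n j b : nat) = b.
Proof. by rewrite /= addnC oddD odd_double; case: b. Qed.

Lemma mk_inj n j b j' b' : @mk n j b = mk j' b' -> j = j' /\ b = b'.
Proof.
move=> h; split; last by rewrite -(mk_odd j b) -(mk_odd j' b') h.
by apply: val_inj; have := mk_half j b; rewrite h mk_half.
Qed.

Lemma insub_half n (u : 'I_n) (j : 'I_(n./2)) : (u : nat)./2 = j ->
  insub ((u : nat)./2) = Some j.
Proof. by move=> ->; rewrite valK. Qed.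

Lemma adj_diff n (x : {ffun 'I_(n./2) -> bool}) (u v : 'I_n) :
  (u : nat)./2 != (v : nat)./2 -> Gx_adj x u v.
Proof.
move=> h; rewrite /Gx_adj (negbTE h) andbT.
by apply: contraNneq h => ->.
Qed.

Lemma adj_same n (x : {ffun 'I_(n./2) -> bool}) (u v : 'I_n) (i : 'I_(n./2)) :
  u != v -> (u : nat)./2 = i -> (v : nat)./2 = i -> Gx_adj x u v = x i.
Proof.
move=> uv hu hv; rewrite /Gx_adj uv hu hv eqxx /=.
by rewrite -{1}hu (insub_half hu).
Qed.

Lemma half_odd_inj n (u v : 'I_n) : (u : nat)./2 = (v : nat)./2 -> odd u = odd v -> u = v.
Proof.
move=> h o; apply: val_inj => /=.
by rewrite -(odd_double_half u) -(odd_double_half v) h o.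
Qed.


Definition setb n (x : {ffun 'I_(n./2) -> bool}) i : {ffun 'I_(n./2) -> bool} :=
  [ffun j => (j == i) || x j].

Definition blk n k (i : 'I_(n./2)) (T : {set 'I_(n./2)}) (l : 'I_k) : 'I_(n./2) :=
  if ((l : nat) < 2)%N then i else nth i (enum T) (l - 2).

Definition fT n k i T : {ffun 'I_k -> 'I_n} :=
  [ffun l => mk (@blk n k i T l) ((l : nat) == 1)].

Lemma blk_T n k i (T : {set 'I_(n./2)}) (l : 'I_k) : (2 <= l)%N -> #|T| = (k - 2)%N -> @blk n k i T l \in T.
Proof.
move=> l2 hT; rewrite /blk ltnNge l2 /=.
rewrite -mem_enum; apply: mem_nth; rewrite -cardE hT; have := ltn_ord l; lia.
Qed.

Lemma blk_inj n k i (T : {set 'I_(n./2)}) (l l' : 'I_k) : (2 <= l)%N -> (2 <= l')%N -> #|T| = (k - 2)%N ->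
  @blk n k i T l = blk i T l' -> l = l'.
Proof.
move=> l2 l'2 hT; rewrite /blk ltnNge l2 ltnNge l'2 /= => /eqP.
have sz : size (enum T) = (k - 2)%N by rewrite -cardE.
rewrite nth_uniq ?enum_uniq ?sz; first by move=> /eqP h; apply: val_inj => /=; lia.
- have := ltn_ord l; lia.
- have := ltn_ord l'; lia.
- by [].
Qed.

Lemma fT_inj n k i (T : {set 'I_(n./2)}) : T \subset [set~ i] -> #|T| = (k - 2)%N -> injective (@fT n k i T).
Proof.
move=> sT hT l l'; rewrite !ffunE => /mk_inj [hb hp].
have bi : forall l0 : 'I_k, (2 <= l0)%N -> blk i T l0 != i.
  move=> l0 h0; have := blk_T i h0 hT; move/subsetP: sT => sT /sT.
  by rewrite !inE.
case: (ltnP l 2) => h1; case: (ltnP l' 2) => h2.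
- apply: val_inj; move: h1 h2 hp; case: l {hb} => [[|[|?]] ?]; case: l' => [[|[|?]] ?] //=.
- by move: (bi _ h2); rewrite -hb /blk h1 eqxx.
- by move: (bi _ h1); rewrite hb /blk h2 eqxx.
- exact: blk_inj hb.
Qed.

Lemma fT_clique n k i (T : {set 'I_(n./2)}) (x : {ffun 'I_(n./2) -> bool}) :
  T \subset [set~ i] -> #|T| = (k - 2)%N ->
  forall l l', l != l' -> Gx_adj (setb x i) (@fT n k i T l) (@fT n k i T l').
Proof.
move=> sT hT l l' ll'.
have ne : @fT n k i T l != @fT n k i T l' by rewrite (inj_eq (fT_inj sT hT)).
have bi : forall l0 : 'I_k, (2 <= l0)%N -> blk i T l0 != i.
  move=> l0 h0; have := blk_T i h0 hT; move/subsetP: sT => sT /sT.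
  by rewrite !inE.
case: (eqVneq (blk i T l) (blk i T l')) => hb; last first.
  by apply: adj_diff; rewrite !ffunE !mk_half; apply: contra_neq hb => /val_inj.
case: (ltnP l 2) => h1; last first.
  case: (ltnP l' 2) => h2.
    by move: (bi _ h1); rewrite hb /blk h2 eqxx.
  by rewrite (blk_inj h1 h2 hT hb) eqxx in ll'.
have bi1 : blk i T l = i by rewrite /blk h1.
rewrite (@adj_same _ _ _ _ i ne); first by rewrite ffunE eqxx.
- by rewrite ffunE mk_half bi1.
- by rewrite ffunE mk_half -hb bi1.
Qed.


Lemma setb_mono n (x : {ffun 'I_(n./2) -> bool}) i u v :
  Gx_adj x u v -> Gx_adj (setb x i) u v.
Proof.
rewrite /Gx_adj => /andP [-> h] /=; move: h; case: ifP => // _.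
by case: insub => // j; rewrite ffunE => ->; rewrite orbT.
Qed.

Lemma fT_in n k (x : {ffun 'I_(n./2) -> bool}) i (T : {set 'I_(n./2)}) :
  (2 <= k)%N -> T \subset [set~ i] -> #|T| = (k - 2)%N ->
  ([set @fT n k i T l | l in 'I_k], cycF (@fT n k i T)) \in CS k (Gx_adj (setb x i)).
Proof.
move=> k2 sT hT; apply: cyc_in => //; first exact: fT_inj.
exact: fT_clique.
Qed.

Lemma fT_notin n k (x : {ffun 'I_(n./2) -> bool}) i (T : {set 'I_(n./2)}) :
  (3 <= k)%N -> x i = false ->
  ([set @fT n k i T l | l in 'I_k], cycF (@fT n k i T)) \notin CS k (Gx_adj x).
Proof.
move=> k3 xi; apply/negP; rewrite inE => /andP [hs _].
have k0 : (0 < k)%N by lia.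
have k1 : (1 < k)%N by lia.
pose l0 := Ordinal k0; pose l1 := Ordinal k1.
have E0 : [set @fT n k i T l0; @fT n k i T l1] \in cycF (@fT n k i T).
  rewrite inE; apply/existsP; exists l0; apply/existsP; exists l1.
  by rewrite eqxx andbT /cyc_adj /= modn_small.
have h0 : ((@fT n k i T l0 : nat))./2 = i by rewrite ffunE mk_half.
have h1 : ((@fT n k i T l1 : nat))./2 = i by rewrite ffunE mk_half.
have /existsP [u /existsP [v /and5P [/eqP e uv a _ _]]] := implyP (forallP hs _) E0.
case: (set2_eq e) => [[eu ev]|[eu ev]]; rewrite -eu -ev in uv a.
  by move: a; rewrite (@adj_same _ x _ _ i uv h0 h1) xi.
by move: a; rewrite (@adj_same _ x _ _ i uv h1 h0) xi.
Qed.

Lemma fT_rec n k i (T : {set 'I_(n./2)}) :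
  T \subset [set~ i] -> #|T| = (k - 2)%N ->
  T = [set j | (mk j false \in [set @fT n k i T l | l in 'I_k]) && (j != i)].
Proof.
move=> sT hT; apply/setP => j; rewrite inE; apply/idP/idP.
  move=> jT; have ji : j != i by move/subsetP: sT => /(_ j jT); rewrite !inE.
  rewrite ji andbT.
  have lt : (index j (enum T) + 2 < k)%N.
    have : (index j (enum T) < size (enum T))%N by rewrite index_mem mem_enum.
    rewrite -cardE hT; lia.
  apply/imsetP; exists (Ordinal lt) => //; rewrite ffunE /blk /=.
  have -> : (index j (enum T) + 2 < 2)%N = false by lia.
  have -> : (index j (enum T) + 2 == 1)%N = false by lia.
  by rewrite addnK nth_index ?mem_enum.
case/andP => /imsetP [l _]; rewrite ffunE => /mk_inj [-> _] ji.
case: (ltnP l 2) => h; first by move: ji; rewrite /blk h eqxx.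
exact: blk_T.
Qed.

Lemma inc n k (x : {ffun 'I_(n./2) -> bool}) i : (3 <= k)%N -> x i = false ->
  (Ck k (Gx_adj x) + 'C(n./2 - 1, k - 2) <= Ck k (Gx_adj (setb x i)))%N.
Proof.
move=> k3 xi.
set D := [set T : {set 'I_(n./2)} | T \subset [set~ i] & #|T| == (k - 2)%N].
have cD : #|D| = 'C(n./2 - 1, k - 2) by rewrite cards_draws cardsC1 card_ord subn1.
pose g := fun T => ([set @fT n k i T l | l in 'I_k], cycF (@fT n k i T)).
have gi : {in D &, injective g}.
  move=> T T'; rewrite !inE => /andP [s1 /eqP c1] /andP [s2 /eqP c2] [h1 _].
  by rewrite [LHS](fT_rec s1 c1) [RHS](fT_rec s2 c2) h1.
rewrite !CkE -cD -(card_in_imset gi).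
have sub1 := CS_mono k (@setb_mono n x i).
have sub2 : g @: D \subset CS k (Gx_adj (setb x i)).
  apply/subsetP => p /imsetP [T]; rewrite inE => /andP [s1 /eqP c1] ->.
  apply: fT_in => //; lia.
have dj : [disjoint CS k (Gx_adj x) & g @: D].
  rewrite -setI_eq0; apply/eqP/setP => p; rewrite !inE.
  apply/negP => /andP [hp /imsetP [T _ e]].
  by move: hp (fT_notin T k3 xi); rewrite e /g inE => ->.
have cu : #|CS k (Gx_adj x) :|: g @: D| = (#|CS k (Gx_adj x)| + #|g @: D|)%N.
  by rewrite cardsU (disjoint_setI0 dj) cards0 subn0.
rewrite -cu.
apply: subset_leq_card; by rewrite subUset sub1 sub2.
Qed.


Lemma count_weight m (x : {ffun 'I_m -> bool}) : count id (fgraph x) = weight x.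
Proof.
rewrite /weight -codom_ffun codomE count_map cardE /enum_mem size_filter.
rewrite (@eq_filter _ _ predT) ?filter_predT //.
by apply: eq_count => j /=; rewrite inE.
Qed.

Lemma perm_fgraph m (x x' : {ffun 'I_m -> bool}) : weight x = weight x' ->
  perm_eq (fgraph x) (fgraph x').
Proof.
move=> w; apply/seq.permP => a.
have hs : size (fgraph x) = size (fgraph x') by rewrite !size_tuple.
have hc : count id (fgraph x) = count id (fgraph x') by rewrite !count_weight.
have hn : count (predC id) (fgraph x) = count (predC id) (fgraph x').
  by have := count_predC id (fgraph x); have := count_predC id (fgraph x'); lia.
case ht: (a true); case hf: (a false).
- have e : a =1 predT by case.
  by rewrite !(eq_count e) !count_predT.
- have e : a =1 id by case.
  by rewrite !(eq_count e).
- have e : a =1 predC id by case.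
  by rewrite !(eq_count e).
- have e : a =1 pred0 by case.
  by rewrite !(eq_count e) !count_pred0.
Qed.

Lemma perm_exists m (x x' : {ffun 'I_m -> bool}) : weight x = weight x' ->
  exists pi : 'I_m -> 'I_m, injective pi /\ forall j, x' (pi j) = x j.
Proof.
move=> /perm_fgraph /tuple_permP [p hp].
have ht : forall r, tnth (fgraph x) r = tnth (fgraph x') (p r).
  move=> r; have : fgraph x = [tuple tnth (fgraph x') (p i) | i < #|'I_m|] by apply: val_inj.
  by move=> ->; rewrite tnth_mktuple.
exists (fun j => enum_val (p (enum_rank j))); split.
  by move=> j j' /enum_val_inj /perm_inj /enum_rank_inj.
move=> j; have := ht (enum_rank j); rewrite !tnth_fgraph enum_rankK => ->.
by [].
Qed.

Lemma hb_proof n (u : 'I_n) : ~~ odd n -> ((u : nat)./2 < n./2)%N.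
Proof.
move=> on; have := odd_double_half n; rewrite (negbTE on) add0n => hn.
have := ltn_ord u; lia.
Qed.

Lemma Ck_sym n k (x x' : {ffun 'I_(n./2) -> bool}) : ~~ odd n -> weight x = weight x' ->
  (Ck k (Gx_adj x) <= Ck k (Gx_adj x'))%N.
Proof.
move=> on /perm_exists [pi [pinj hpi]].
pose hb := fun u : 'I_n => Ordinal (hb_proof u on).
pose s := fun u : 'I_n => mk (pi (hb u)) (odd u).
have hbE : forall u v, (hb u == hb v) = ((u : nat)./2 == (v : nat)./2).
  by move=> u v; rewrite -val_eqE.
have sinj : injective s.
  move=> u v /mk_inj [/pinj /(congr1 val) /= h o]; exact: half_odd_inj.
apply: (@Ck_inj n k (Gx_adj x) (Gx_adj x') s sinj) => u v.
rewrite /Gx_adj (inj_eq sinj) !mk_half val_eqE (inj_eq pinj) hbE.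
case: ifP => // _.
by rewrite valK (@insub_half _ u (hb u) erefl) hpi.
Qed.


Lemma weight_setb n (x : {ffun 'I_(n./2) -> bool}) i : x i = false ->
  weight (setb x i) = (weight x).+1.
Proof.
move=> xi; rewrite /weight.
have -> : [set j | setb x i j] = i |: [set j | x j].
  by apply/setP => j; rewrite !inE ffunE.
by rewrite cardsU1 inE xi.
Qed.

Lemma exists_false m (x : {ffun 'I_m -> bool}) : (weight x < m)%N -> exists i, x i = false.
Proof.
case: (pickP (fun i => ~~ x i)) => [i /negbTE hi|h]; first by exists i.
have : [set j | x j] = setT by apply/setP => j; rewrite !inE; move: (h j) => /negbFE.
by rewrite /weight => ->; rewrite cardsT card_ord ltnn.
Qed.

Lemma chain n k : (3 <= k)%N -> forall d (x' : {ffun 'I_(n./2) -> bool}),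
  (weight x' + d <= n./2)%N -> exists z : {ffun 'I_(n./2) -> bool},
  weight z = (weight x' + d)%N /\
  (Ck k (Gx_adj x') + d * 'C(n./2 - 1, k - 2) <= Ck k (Gx_adj z))%N.
Proof.
move=> k3; elim=> [|d IH] x' h.
  by exists x'; rewrite addn0 mul0n addn0.
have [i xi] : exists i, x' i = false by apply: exists_false; lia.
have := IH (setb x' i); rewrite weight_setb // => /(_ ltac:(lia)) [z [wz cz]].
exists z; split; first lia.
have := @inc n k x' i k3 xi; lia.
Qed.

Lemma ffact_lb r N : ((N - r) ^ r <= N ^_ r)%N.
Proof.
elim: r N => [|r IH] N; first by rewrite expn0 ffactn0.
case: N => [|N]; first by rewrite sub0n exp0n.
rewrite ffactSS expnS subSS; apply: leq_mul; first lia.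
exact: IH.
Qed.


Lemma bound n k : (3 <= k)%N -> (4 * k <= n)%N -> ~~ odd n ->
  (n ^ (k - 2) <= 4 ^ (k - 2) * (k - 2)`! * 'C(n./2 - 1, k - 2))%N.
Proof.
move=> k3 hn on.
have := odd_double_half n; rewrite (negbTE on) add0n => hh.
rewrite -mulnA [((k - 2)`! * _)%N]mulnC bin_ffact.
apply: (@leq_trans ((4 * (n./2 - 1 - (k - 2))) ^ (k - 2))).
  rewrite leq_exp2r; lia.
by rewrite expnMn leq_mul2l ffact_lb orbT.
Qed.

Local Open Scope ring_scope.

Theorem lemma4 (R : realType) (k : nat) (hk : (3 <= k)%N) :
  exists (c : R) (n0 : nat), 0 < c /\
    forall (n : nat), (n0 <= n)%N -> ~~ odd n ->
    forall (x x' : {ffun 'I_(n./2) -> bool}),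
      (weight x' <= weight x)%N ->
      c * (n%:R) ^+ (k - 2) * ((weight x - weight x')%N)%:R
        <= (Ck k (Gx_adj x))%:R - (Ck k (Gx_adj x'))%:R.
Proof.
set K := (4 ^ (k - 2) * (k - 2)`!)%N.
have K0 : (0 < K)%N by rewrite muln_gt0 expn_gt0 fact_gt0.
exists (K%:R)^-1, (4 * k)%N; split; first by rewrite invr_gt0 ltr0n.
move=> n hn on x x' hw.
set d := (weight x - weight x')%N.
set L := 'C(n./2 - 1, k - 2).
have wx : (weight x <= n./2)%N.
  by rewrite /weight -[X in (_ <= X)%N]card_ord max_card.
have [z [wz cz]] := @chain n k hk d x' ltac:(lia).
have ez : Ck k (Gx_adj z) = Ck k (Gx_adj x).
  have wzx : weight z = weight x by rewrite wz /d; lia.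
  by apply/eqP; rewrite eqn_leq !Ck_sym.
rewrite ez in cz.
have hb := bound hk hn on.
have h1 : (K%:R)^-1 * n%:R ^+ (k - 2) <= L%:R :> R.
  rewrite ler_pdivrMl ?ltr0n // -natrX -natrM ler_nat.
  by rewrite /K /L.
have h2 : ((Ck k (Gx_adj x') + d * L)%N)%:R <= (Ck k (Gx_adj x))%:R :> R by rewrite ler_nat.
rewrite natrD natrM in h2.
have h3 : (K%:R)^-1 * n%:R ^+ (k - 2) * d%:R <= L%:R * d%:R :> R.
  by rewrite ler_wpM2r ?ler0n.
rewrite -/d; lra.
Qed.
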